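(* Let $\mathbb{E}$ be a regular category, $\Sigma$ a fibrational class of split epimorphisms, and suppose $\mathbb{E}$ is a $\Sigma$-Mal'tsev category. Let $R$ be a reflexive relation and $S$ a symmetric $\Sigma$-relation on an object $X$. Then $R$ and $S$ permute: $R\circ S=S\circ R$.
   Context: A split epimorphism is a pair $(f,s)$ with $fs=1$. A class $\Sigma$ of split epimorphisms is fibrational if it contains all split epimorphisms $(f,s)$ with $f$ invertible and is stable under pullback along any morphism. A pair of morphisms with common codomain $Z$ is jointly extremally epic if it factors jointly through no non-invertible monomorphism into $Z$. $\mathbb{E}$ is $\Sigma$-Mal'tsev if for every split epimorphism $(f,s)\colon X\rightleftarrows Y$ in $\Sigma$ and every split epimorphism $(g,t)$ with $g\colon Y'\to Y$, letting $X'=Y'\times_YX$, $s'=(1_{Y'},sg)$, $\bar t=(tf,1_X)$, the pair $(s',\bar t)$ is jointly extremally epic. A $\Sigma$-relation on $X$ is a reflexive relation $(d_0,d_1)\colon S\rightarrowtail X\times X$ with reflexivity $s_0$ such that $(d_0,s_0)\in\Sigma$. In a regular category, for relations $R$ on $X$ and $S$ on $X$, the composite $R\circ S$ is the image of the morphism $(d_0^R\pi_0,d_1^S\pi_1)\colon T\to X\times X$, where $T$ is the pullback of $d_0^S$ along $d_1^R$ with projections $\pi_0\colon T\to R$, $\pi_1\colon T\to S$ (so in set-theoretic terms $x(R\circ S)z$ iff $xRySz$ for some $y$). *)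

(* Defs.v *)
Set Implicit Arguments.
Unset Strict Implicit.

Record Category := {
  Ob :> Type;
  Hom : Ob -> Ob -> Type;
  idm : forall a, Hom a a;
  comp : forall a b c, Hom b c -> Hom a b -> Hom a c;
  comp_assoc : forall a b c d (h : Hom c d) (g : Hom b c) (f : Hom a b),
      comp h (comp g f) = comp (comp h g) f;
  comp_id_l : forall a b (f : Hom a b), comp (idm b) f = f;
  comp_id_r : forall a b (f : Hom a b), comp f (idm a) = f
}.

Arguments Hom : clear implicits.
Arguments idm {c} a : rename.
Arguments comp {c a b c0} _ _ : rename.
Notation "g \o f" := (comp g f) (at level 40, left associativity).

Section Basic.
Variable C : Category.

Definition is_mono {a b : C} (m : Hom C a b) : Prop :=
  forall z (x y : Hom C z a), m \o x = m \o y -> x = y.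

Definition is_iso {a b : C} (f : Hom C a b) : Prop :=
  exists g : Hom C b a, g \o f = idm a /\ f \o g = idm b.

Definition jointly_monic {r a b : C} (d0 : Hom C r a) (d1 : Hom C r b) : Prop :=
  forall z (x y : Hom C z r), d0 \o x = d0 \o y -> d1 \o x = d1 \o y -> x = y.

Definition is_pullback {A B Z P : C} (f : Hom C A Z) (g : Hom C B Z)
    (pA : Hom C P A) (pB : Hom C P B) : Prop :=
  f \o pA = g \o pB /\
  forall Q (qA : Hom C Q A) (qB : Hom C Q B), f \o qA = g \o qB ->
    exists u : Hom C Q P, (pA \o u = qA /\ pB \o u = qB) /\
      forall v : Hom C Q P, pA \o v = qA -> pB \o v = qB -> v = u.

Definition is_terminal (t : C) : Prop :=
  forall a, exists f : Hom C a t, forall g : Hom C a t, g = f.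

Definition is_coequalizer {A B Q : C} (f g : Hom C A B) (q : Hom C B Q) : Prop :=
  q \o f = q \o g /\
  forall Z (h : Hom C B Z), h \o f = h \o g ->
    exists u : Hom C Q Z, u \o q = h /\ forall v : Hom C Q Z, v \o q = h -> v = u.

Definition is_regular_epi {B Q : C} (q : Hom C B Q) : Prop :=
  exists A (f g : Hom C A B), is_coequalizer f g q.

Definition regular : Prop :=
  (exists t : C, is_terminal t) /\
  (forall A B Z (f : Hom C A Z) (g : Hom C B Z),
      exists P (pA : Hom C P A) (pB : Hom C P B), is_pullback f g pA pB) /\
  (forall A B (f : Hom C A B) P (p1 p2 : Hom C P A), is_pullback f f p1 p2 ->
      exists Q (q : Hom C A Q), is_coequalizer p1 p2 q) /\
  (forall A B Z (e : Hom C A Z) (g : Hom C B Z) P (pA : Hom C P A) (pB : Hom C P B),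
      is_regular_epi e -> is_pullback e g pA pB -> is_regular_epi pB).

Definition splitclass := forall A B : C, Hom C A B -> Hom C B A -> Prop.

Definition is_split_epi {A B : C} (f : Hom C A B) (s : Hom C B A) : Prop :=
  f \o s = idm B.

Definition fibrational (Sig : splitclass) : Prop :=
  (forall A B (f : Hom C A B) s, Sig A B f s -> is_split_epi f s) /\
  (forall A B (f : Hom C A B) s, is_split_epi f s -> is_iso f -> Sig A B f s) /\
  (forall X Y (f : Hom C X Y) (s : Hom C Y X), Sig X Y f s ->
   forall Y' (g : Hom C Y' Y) X' (f' : Hom C X' Y') (gbar : Hom C X' X),
     is_pullback g f f' gbar ->
     forall s' : Hom C Y' X', f' \o s' = idm Y' -> gbar \o s' = s \o g ->
       Sig X' Y' f' s').

Definition jointly_extremally_epic {A B Z : C} (u : Hom C A Z) (v : Hom C B Z) : Prop :=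
  forall M (m : Hom C M Z) (a : Hom C A M) (b : Hom C B M),
    is_mono m -> m \o a = u -> m \o b = v -> is_iso m.

Definition Sigma_Maltsev (Sig : splitclass) : Prop :=
  forall X Y (f : Hom C X Y) (s : Hom C Y X), Sig X Y f s ->
  forall Y' (g : Hom C Y' Y) (t : Hom C Y Y'), g \o t = idm Y ->
  forall X' (f' : Hom C X' Y') (gbar : Hom C X' X), is_pullback g f f' gbar ->
  forall (s' : Hom C Y' X') (tbar : Hom C X X'),
    f' \o s' = idm Y' -> gbar \o s' = s \o g ->
    f' \o tbar = t \o f -> gbar \o tbar = idm X ->
    jointly_extremally_epic s' tbar.

(** Relations on X: jointly monic pairs (d0, d1) : S -> X
    (i.e. monomorphisms (d0,d1) : S >-> X x X). *)
Record relation (X : C) := {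
  rel_ob : C;
  rd0 : Hom C rel_ob X;
  rd1 : Hom C rel_ob X;
  rel_jm : jointly_monic rd0 rd1
}.

Definition reflexive {X : C} (R : relation X) : Prop :=
  exists s0 : Hom C X (rel_ob R), rd0 R \o s0 = idm X /\ rd1 R \o s0 = idm X.

Definition symmetric {X : C} (R : relation X) : Prop :=
  exists sg : Hom C (rel_ob R) (rel_ob R), rd0 R \o sg = rd1 R /\ rd1 R \o sg = rd0 R.

Definition Sigma_relation (Sig : splitclass) {X : C} (R : relation X) : Prop :=
  exists s0 : Hom C X (rel_ob R),
    rd0 R \o s0 = idm X /\ rd1 R \o s0 = idm X /\ Sig _ _ (rd0 R) s0.

(** [K] is (a representative of) the composite relation R o S:
    for some pullback T of d0^S along d1^R with projections pi0 : T -> R, pi1 : T -> S,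
    K is the image of (d0^R pi0, d1^S pi1) : T -> X x X, i.e. there is a regular
    epimorphism e : T -> K with (d0^K, d1^K) e = (d0^R pi0, d1^S pi1). *)
Definition is_composite {X : C} (R S K : relation X) : Prop :=
  exists T (pi0 : Hom C T (rel_ob R)) (pi1 : Hom C T (rel_ob S)),
    is_pullback (rd1 R) (rd0 S) pi0 pi1 /\
    exists e : Hom C T (rel_ob K),
      is_regular_epi e /\ rd0 K \o e = rd0 R \o pi0 /\ rd1 K \o e = rd1 S \o pi1.

(** Equality of relations as subobjects of X x X. *)
Definition same_relation {X : C} (K L : relation X) : Prop :=
  exists phi : Hom C (rel_ob K) (rel_ob L),
    is_iso phi /\ rd0 L \o phi = rd0 K /\ rd1 L \o phi = rd1 K.

End Basic.

(* Main.v *)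
Require Import Defs.

Section Helpers.
Variable C : Category.

Lemma cancel_l {a b c : C} (f : Hom C b a) (g : Hom C a b) (h : Hom C c a) :
  f \o g = idm a -> f \o (g \o h) = h.
Proof. intro H. rewrite comp_assoc, H, comp_id_l. reflexivity. Qed.

Lemma reg_epi_epi {B Q : C} (q : Hom C B Q) : is_regular_epi q ->
  forall Z (x y : Hom C Q Z), x \o q = y \o q -> x = y.
Proof.
  intros [A [f [g [Hc Hu]]]] Z x y Hxy.
  assert (Hh : (x \o q) \o f = (x \o q) \o g).
  { rewrite <- !comp_assoc, Hc. reflexivity. }
  destruct (Hu Z (x \o q) Hh) as [w [_ Hw]].
  rewrite (Hw x eq_refl), (Hw y (eq_sym Hxy)). reflexivity.
Qed.

Lemma pb_swap {A B Z P : C} (f : Hom C A Z) (g : Hom C B Z) pA pB :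
  is_pullback f g pA pB -> is_pullback (P:=P) g f pB pA.
Proof.
  intros [He Hu]. split; [symmetry; exact He|].
  intros Q qA qB Hq. destruct (Hu Q qB qA (eq_sym Hq)) as [u [[H1 H2] H3]].
  exists u. split; [split; assumption|]. intros v Hv1 Hv2. apply H3; assumption.
Qed.

Definition has_product (A B : C) : Prop :=
  exists P (p1 : Hom C P A) (p2 : Hom C P B),
    forall Q (a : Hom C Q A) (b : Hom C Q B), exists u : Hom C Q P,
      (p1 \o u = a /\ p2 \o u = b) /\
      forall v, p1 \o v = a -> p2 \o v = b -> v = u.

Lemma products : regular C -> forall A B, has_product A B.
Proof.
  intros [[t Ht] [Hpb _]] A B.
  destruct (Ht A) as [ta _]. destruct (Ht B) as [tb _].
  destruct (Hpb _ _ _ ta tb) as [P [p1 [p2 [_ Hu]]]].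
  exists P, p1, p2. intros Q a b.
  assert (E : ta \o a = tb \o b).
  { destruct (Ht Q) as [tq Hq]. rewrite (Hq (ta \o a)), (Hq (tb \o b)). reflexivity. }
  exact (Hu Q a b E).
Qed.

Lemma factor (HC : regular C) (X T : C) (p q : Hom C T X) (K : relation X)
  Y1 Y2 (u : Hom C Y1 T) (v : Hom C Y2 T) :
  jointly_extremally_epic u v ->
  (exists a : Hom C Y1 (rel_ob K), rd0 K \o a = p \o u /\ rd1 K \o a = q \o u) ->
  (exists b : Hom C Y2 (rel_ob K), rd0 K \o b = p \o v /\ rd1 K \o b = q \o v) ->
  exists h : Hom C T (rel_ob K), rd0 K \o h = p /\ rd1 K \o h = q.
Proof.
  intros Hje [a [Ha0 Ha1]] [b [Hb0 Hb1]].
  destruct (products HC X X) as [P [p1 [p2 Hprod]]].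
  destruct (Hprod T p q) as [cT [[HcT1 HcT2] _]].
  destruct (Hprod _ (rd0 K) (rd1 K)) as [cK [[HcK1 HcK2] _]].
  destruct HC as [_ [Hpb _]].
  destruct (Hpb _ _ _ cT cK) as [M [mT [mK [HM HMu]]]].
  assert (L0 : rd0 K \o mK = p \o mT).
  { rewrite <- HcK1, <- comp_assoc, <- HM, comp_assoc, HcT1. reflexivity. }
  assert (L1 : rd1 K \o mK = q \o mT).
  { rewrite <- HcK2, <- comp_assoc, <- HM, comp_assoc, HcT2. reflexivity. }
  assert (Pair : forall Z (x : Hom C Z T) (y : Hom C Z (rel_ob K)),
             rd0 K \o y = p \o x -> rd1 K \o y = q \o x -> cT \o x = cK \o y).
  { intros Z x y H0 H1.
    destruct (Hprod Z (p \o x) (q \o x)) as [w [_ Hw]].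
    rewrite (Hw (cT \o x)), (Hw (cK \o y)); try reflexivity;
      rewrite comp_assoc; try rewrite HcT1; try rewrite HcT2;
      try rewrite HcK1; try rewrite HcK2; auto. }
  assert (Hmono : is_mono mT).
  { intros Z x y Hxy.
    assert (Ek : mK \o x = mK \o y).
    { apply rel_jm; rewrite !comp_assoc; [rewrite L0 | rewrite L1];
        rewrite <- !comp_assoc, Hxy; reflexivity. }
    assert (Ex : cT \o (mT \o x) = cK \o (mK \o x)).
    { rewrite !comp_assoc, HM. reflexivity. }
    destruct (HMu Z _ _ Ex) as [w [_ Hw]].
    rewrite (Hw x eq_refl eq_refl), (Hw y (eq_sym Hxy) (eq_sym Ek)). reflexivity. }
  destruct (HMu _ u a (Pair _ u a Ha0 Ha1)) as [a' [[Ha'1 _] _]].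
  destruct (HMu _ v b (Pair _ v b Hb0 Hb1)) as [b' [[Hb'1 _] _]].
  destruct (Hje M mT a' b' Hmono Ha'1 Hb'1) as [n [Hn1 Hn2]].
  exists (mK \o n). rewrite !comp_assoc, L0, L1, <- !comp_assoc, Hn2, !comp_id_r.
  split; reflexivity.
Qed.

Lemma descend {X : C} (K1 K2 : relation X) T (e : Hom C T (rel_ob K1))
  (h : Hom C T (rel_ob K2)) : is_regular_epi e ->
  rd0 K2 \o h = rd0 K1 \o e -> rd1 K2 \o h = rd1 K1 \o e ->
  exists phi : Hom C (rel_ob K1) (rel_ob K2),
    rd0 K2 \o phi = rd0 K1 /\ rd1 K2 \o phi = rd1 K1.
Proof.
  intros He H0 H1.
  pose proof (reg_epi_epi e He) as Hepi.
  destruct He as [A [f [g [Hc Hu]]]].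
  assert (Hhc : h \o f = h \o g).
  { apply rel_jm; rewrite !comp_assoc; [rewrite H0 | rewrite H1];
      rewrite <- !comp_assoc, Hc; reflexivity. }
  destruct (Hu _ h Hhc) as [phi [Hphi _]].
  exists phi. split; apply Hepi; rewrite <- comp_assoc, Hphi; assumption.
Qed.

Lemma antisym {X : C} (K L : relation X) (phi : Hom C (rel_ob K) (rel_ob L))
  (psi : Hom C (rel_ob L) (rel_ob K)) :
  rd0 L \o phi = rd0 K -> rd1 L \o phi = rd1 K ->
  rd0 K \o psi = rd0 L -> rd1 K \o psi = rd1 L -> same_relation K L.
Proof.
  intros A0 A1 B0 B1. exists phi. split; [|split; assumption].
  exists psi. split; apply rel_jm; rewrite comp_assoc, ?comp_id_r.
  - rewrite B0, A0. reflexivity.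
  - rewrite B1, A1. reflexivity.
  - rewrite A0, B0. reflexivity.
  - rewrite A1, B1. reflexivity.
Qed.

End Helpers.
Theorem proposition2p6 (C : Category) (Sig : splitclass C) :
  regular C -> fibrational Sig -> Sigma_Maltsev Sig ->
  forall (X : C) (R S : relation X),
    reflexive R -> symmetric S -> Sigma_relation Sig S ->
    forall RS SR : relation X,
      is_composite R S RS -> is_composite S R SR ->
      same_relation RS SR.
Proof.
  intros HC Hfib HM X R S [r0 [Hr0 Hr1]] [sg [Hsg0 Hsg1]] [s0 [Hs0 [Hs1 HSig]]]
    RS SR [T [pi0 [pi1 [HT [e [He [He0 He1]]]]]]]
    [T2 [rho0 [rho1 [HT2 [e2 [He2 [He20 He21]]]]]]].
  pose proof HT as HTsave. pose proof HT2 as HT2save.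
  destruct HT as [HTe HTu].
  assert (E1 : rd1 R \o idm _ = rd0 S \o (s0 \o rd1 R)).
  { rewrite comp_id_r, cancel_l by exact Hs0. reflexivity. }
  destruct (HTu _ _ _ E1) as [sp [[Hsp0 Hsp1] _]].
  assert (E2 : rd1 R \o (r0 \o rd0 S) = rd0 S \o idm _).
  { rewrite comp_id_r, cancel_l by exact Hr1. reflexivity. }
  destruct (HTu _ _ _ E2) as [tb [[Htb0 Htb1] _]].
  destruct HT2 as [HT2e HT2u].
  assert (E3 : rd1 S \o (s0 \o rd0 R) = rd0 R \o idm _).
  { rewrite comp_id_r, cancel_l by exact Hs1. reflexivity. }
  destruct (HT2u _ _ _ E3) as [ua [[Hua0 Hua1] _]].
  assert (E4 : rd1 S \o idm _ = rd0 R \o (r0 \o rd1 S)).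
  { rewrite comp_id_r, cancel_l by exact Hr0. reflexivity. }
  destruct (HT2u _ _ _ E4) as [ub [[Hub0 Hub1] _]].
  assert (D1 : exists phi : Hom C (rel_ob RS) (rel_ob SR),
             rd0 SR \o phi = rd0 RS /\ rd1 SR \o phi = rd1 RS).
  { pose proof (HM (rel_ob S) X (rd0 S) s0 HSig (rel_ob R) (rd1 R) r0 Hr1 T pi0 pi1
                  HTsave sp tb Hsp0 Hsp1 Htb0 Htb1) as Hje.
    destruct (factor C HC X T (rd0 R \o pi0) (rd1 S \o pi1) SR _ _ sp tb Hje) as [h [Hh0 Hh1]].
    - exists (e2 \o ua). rewrite !comp_assoc, He20, He21, <- !comp_assoc,
        Hua0, Hua1, Hsp0, Hsp1, comp_id_r, cancel_l by exact Hs0.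
      split; [reflexivity|]. rewrite comp_id_r, comp_assoc, Hs1, comp_id_l. reflexivity.
    - exists (e2 \o ub). rewrite !comp_assoc, He20, He21, <- !comp_assoc,
        Hub0, Hub1, Htb0, Htb1, comp_id_r, comp_id_r.
      rewrite comp_assoc, Hr0, comp_id_l. rewrite comp_assoc, Hr1, comp_id_l.
      split; reflexivity.
    - apply (descend C RS SR T e h He).
      + rewrite Hh0, He0. reflexivity.
      + rewrite Hh1, He1. reflexivity. }
  assert (HSig1 : Sig (rel_ob S) X (rd1 S) s0).
  { destruct Hfib as [_ [_ Hst]].
    assert (Hsgs : sg \o s0 = s0 \o idm X).
    { rewrite comp_id_r. apply rel_jm; rewrite comp_assoc.
      - rewrite Hsg0, Hs1, Hs0. reflexivity.
      - rewrite Hsg1, Hs1, Hs0. reflexivity. }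
    assert (Hsgsg : sg \o sg = idm _).
    { apply rel_jm; rewrite comp_assoc, comp_id_r.
      - rewrite Hsg0, Hsg1. reflexivity.
      - rewrite Hsg1, Hsg0. reflexivity. }
    assert (Hpb : is_pullback (idm X) (rd0 S) (rd1 S) sg).
    { split; [rewrite comp_id_l, Hsg0; reflexivity|].
      intros Q qA qB Hq. exists (sg \o qB). split; [split|].
      - rewrite comp_assoc, Hsg1, <- Hq, comp_id_l. reflexivity.
      - rewrite cancel_l by exact Hsgsg. reflexivity.
      - intros v _ Hv2. rewrite <- Hv2, cancel_l by exact Hsgsg. reflexivity. }
    exact (Hst (rel_ob S) X (rd0 S) s0 HSig X (idm X) (rel_ob S) (rd1 S) sg Hpb s0 Hs1 Hsgs). }
  assert (D2 : exists psi : Hom C (rel_ob SR) (rel_ob RS),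
             rd0 RS \o psi = rd0 SR /\ rd1 RS \o psi = rd1 SR).
  { pose proof (HM (rel_ob S) X (rd1 S) s0 HSig1 (rel_ob R) (rd0 R) r0 Hr0 T2 rho1 rho0
                  (pb_swap C _ _ _ _ HT2save) ua ub Hua1 Hua0 Hub1 Hub0) as Hje.
    destruct (factor C HC X T2 (rd0 S \o rho0) (rd1 R \o rho1) RS _ _ ua ub Hje) as [h [Hh0 Hh1]].
    - exists (e \o sp). rewrite !comp_assoc, He0, He1, <- !comp_assoc,
        Hua0, Hua1, Hsp0, Hsp1, !comp_id_r.
      rewrite comp_assoc, Hs0, comp_id_l. rewrite comp_assoc, Hs1, comp_id_l.
      split; reflexivity.
    - exists (e \o tb). rewrite !comp_assoc, He0, He1, <- !comp_assoc,
        Hub0, Hub1, Htb0, Htb1, !comp_id_r.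
      rewrite comp_assoc, Hr0, comp_id_l. rewrite comp_assoc, Hr1, comp_id_l.
      split; reflexivity.
    - apply (descend C SR RS T2 e2 h He2).
      + rewrite Hh0, He20. reflexivity.
      + rewrite Hh1, He21. reflexivity. }
  destruct D1 as [phi [P0 P1]]. destruct D2 as [psi [Q0 Q1]].
  exact (antisym C RS SR phi psi P0 P1 Q0 Q1).
Qed.
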